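(* Let $P_0,P_1,Q_2\in\mathbb H$ be pairwise distinct with $\langle P_0,P_1\rangle=\langle P_0,Q_2\rangle=\langle P_1,Q_2\rangle$, and let $R_2=\frac{P_0+P_1+Q_2}{\sqrt{-\langle P_0+P_1+Q_2,P_0+P_1+Q_2\rangle}}\in\mathbb H$ be its centroid. Then there is $\varepsilon_2\in\{-1,1\}$ such that $$R_2=\frac{\sqrt{1-2\langle P_0,P_1\rangle}\,(P_0+P_1)+\varepsilon_2\,P_0\tilde\times P_1}{\sqrt3\,\bigl(1-\langle P_0,P_1\rangle\bigr)}.$$
   Context: $\langle v,w\rangle=-v_1w_1+v_2w_2+v_3w_3$ on $\mathbb R^3$; $\mathbb H=\{P\in\mathbb R^3:\langle P,P\rangle=-1,\ P_1\ge1\}$; $v\tilde\times w:=J(v\times w)$ with $J=\mathrm{diag}(-1,1,1)$ and $\times$ the Euclidean cross product. *)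

(* Defs.v *)
From Stdlib Require Import Reals.
Open Scope R_scope.

Record vec3 := V3 { x1 : R; x2 : R; x3 : R }.

Definition lor (v w : vec3) : R := - x1 v * x1 w + x2 v * x2 w + x3 v * x3 w.

Definition inH (P : vec3) : Prop := lor P P = -1 /\ 1 <= x1 P.

Definition vadd (v w : vec3) : vec3 := V3 (x1 v + x1 w) (x2 v + x2 w) (x3 v + x3 w).
Definition vscale (a : R) (v : vec3) : vec3 := V3 (a * x1 v) (a * x2 v) (a * x3 v).

Definition cross (v w : vec3) : vec3 :=
  V3 (x2 v * x3 w - x3 v * x2 w)
     (x3 v * x1 w - x1 v * x3 w)
     (x1 v * x2 w - x2 v * x1 w).

Definition Jmap (v : vec3) : vec3 := V3 (- x1 v) (x2 v) (x3 v).

Definition lcross (v w : vec3) : vec3 := Jmap (cross v w).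

(* Main.v *)
Require Import Defs.
From Stdlib Require Import Reals Lra Psatz.
Open Scope R_scope.

Lemma lor_sym P Q : lor P Q = lor Q P.
Proof. unfold lor; ring. Qed.

Lemma lor_le (P Q : vec3) : inH P -> inH Q -> lor P Q <= -1.
Proof.
  destruct P as [t x y], Q as [t' x' y']; unfold inH, lor; simpl.
  intros [h1 h2] [h3 h4].
  assert (E: (x*x'+y*y')^2 + (x*y'-y*x')^2 = (x*x+y*y)*(x'*x'+y'*y')) by ring.
  assert (E2: (t*t'-1)^2 - (t-t')^2 = (t*t-1)*(t'*t'-1)) by ring.
  assert (tt: 1 <= t*t') by nra.
  destruct (Rle_dec (x*x'+y*y') (t*t'-1)) as [l|l]; [lra|].
  exfalso. apply Rnot_le_lt in l.
  assert ((x*x+y*y) = t*t-1) by lra.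
  assert ((x'*x'+y'*y') = t'*t'-1) by lra.
  assert ((x*x'+y*y')^2 > (t*t'-1)^2) by nra.
  rewrite H, H0 in E. rewrite <- E2 in E.
  pose proof (pow2_ge_0 (x*y'-y*x')). pose proof (pow2_ge_0 (t-t')). lra.
Qed.

Lemma lor_eq (P Q : vec3) : inH P -> inH Q -> lor P Q = -1 -> P = Q.
Proof.
  destruct P as [t x y], Q as [t' x' y']; unfold inH, lor; simpl.
  intros [h1 h2] [h3 h4] h.
  assert (E: (x*x'+y*y')^2 + (x*y'-y*x')^2 = (x*x+y*y)*(x'*x'+y'*y')) by ring.
  assert (E2: (t*t'-1)^2 - (t-t')^2 = (t*t-1)*(t'*t'-1)) by ring.
  assert ((x*x+y*y) = t*t-1) by lra.
  assert ((x'*x'+y'*y') = t'*t'-1) by lra.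
  assert (x*x'+y*y' = t*t'-1) by lra.
  rewrite H, H0, H1 in E. rewrite <- E2 in E.
  pose proof (pow2_ge_0 (x*y'-y*x')). pose proof (pow2_ge_0 (t-t')).
  assert (Ht0 : (t-t')^2 = 0) by lra.
  assert (Ht: t = t') by (apply Rminus_diag_uniq; nra). subst t'.
  assert (E3: (x-x')^2+(y-y')^2 = 0).
  { replace ((x-x')^2+(y-y')^2) with ((x*x+y*y) + (x'*x'+y'*y') - 2*(x*x'+y*y')) by ring. lra. }
  pose proof (pow2_ge_0 (x-x')). pose proof (pow2_ge_0 (y-y')).
  assert ((x-x')^2 = 0) by lra. assert ((y-y')^2 = 0) by lra.
  assert (x = x') by nra. assert (y = y') by nra. subst; reflexivity.
Qed.

Definition dot (v w : vec3) : R := x1 v * x1 w + x2 v * x2 w + x3 v * x3 w.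

Lemma fin_id (r s a A Q : R) : s*s = 1-2*a -> 0 < s -> 0 < r -> a < -1 ->
  / (r * s) * (A + Q) = / (r * (1 - a)) * (s * A + ((1-a)*Q + a*A) / s).
Proof.
  intros h hs hr ha.
  assert (ha' : a = (1 - s*s)/2) by lra. subst a.
  field. repeat split; try lra; nra.
Qed.

Theorem lemma2p4 (P0 P1 Q2 : vec3) :
  inH P0 -> inH P1 -> inH Q2 ->
  P0 <> P1 -> P0 <> Q2 -> P1 <> Q2 ->
  lor P0 P1 = lor P0 Q2 -> lor P0 Q2 = lor P1 Q2 ->
  let S := vadd (vadd P0 P1) Q2 in
  let R2 := vscale (/ sqrt (- lor S S)) S in
  exists eps2 : R, (eps2 = 1 \/ eps2 = -1) /\
    R2 = vscale (/ (sqrt 3 * (1 - lor P0 P1)))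
           (vadd (vscale (sqrt (1 - 2 * lor P0 P1)) (vadd P0 P1))
                 (vscale eps2 (lcross P0 P1))).
Proof.
  intros H0 H1 H2 d01 d02 d12 e1 e2 S R2.
  pose proof (lor_le _ _ H0 H1) as hle.
  assert (hne : lor P0 P1 <> -1) by (intro h; apply d01; apply lor_eq; auto).
  destruct H0 as [n0 _], H1 as [n1 _], H2 as [n2 _].
  set (a := lor P0 P1) in *.
  assert (ha : a < -1) by lra.
  assert (q0 : lor Q2 P0 = a) by (rewrite lor_sym; lra).
  assert (q1 : lor Q2 P1 = a) by (rewrite lor_sym; lra).
  assert (p10 : lor P1 P0 = a) by (rewrite lor_sym; reflexivity).
  set (s := sqrt (1 - 2*a)).
  assert (hs : 0 < s) by (apply sqrt_lt_R0; lra).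
  assert (hss : s * s = 1 - 2*a) by (apply sqrt_sqrt; lra).
  assert (hSS : lor S S = lor P0 P0 + lor P1 P1 + lor Q2 Q2
                 + 2*(lor P0 P1 + lor Q2 P0 + lor Q2 P1))
    by (unfold S, lor, vadd; simpl; ring).
  assert (hsq : sqrt (- lor S S) = sqrt 3 * s).
  { rewrite hSS, n0, n1, n2, q0, q1. fold a.
    unfold s. rewrite <- sqrt_mult by lra. f_equal. ring. }
  set (d1 := (1-a)*x1 Q2 + a*(x1 P0 + x1 P1)).
  set (d2 := (1-a)*x2 Q2 + a*(x2 P0 + x2 P1)).
  set (d3 := (1-a)*x3 Q2 + a*(x3 P0 + x3 P1)).
  set (u := V3 (-d1) d2 d3).
  set (n := cross P0 P1).
  assert (hu0 : dot u P0 = 0).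
  { assert (dot u P0 = (1-a) * lor Q2 P0 + a*(lor P0 P0 + lor P1 P0))
      by (unfold dot, u, d1, d2, d3, lor; simpl; ring).
    rewrite H, q0, n0, p10. ring. }
  assert (hu1 : dot u P1 = 0).
  { assert (dot u P1 = (1-a) * lor Q2 P1 + a*(lor P0 P1 + lor P1 P1))
      by (unfold dot, u, d1, d2, d3, lor; simpl; ring).
    rewrite H, q1, n1. fold a. ring. }
  assert (hnn : lor n n = a*a - 1).
  { assert (lor n n = lor P0 P1 * lor P0 P1 - lor P0 P0 * lor P1 P1)
      by (unfold n, lor, cross; simpl; ring).
    rewrite H, n0, n1. fold a. ring. }
  set (nn := dot n n).
  assert (hnz : nn <> 0).
  { intro h. unfold nn, dot in h.
    assert (z1 : x1 n = 0) by nra. assert (z2 : x2 n = 0) by nra. assert (z3 : x3 n = 0) by nra.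
    unfold lor in hnn. rewrite z1, z2, z3 in hnn. nra. }
  set (lam := dot u n / nn).
  assert (k1 : x1 u = lam * x1 n).
  { unfold lam. apply (Rmult_eq_reg_l nn); [|exact hnz]. field_simplify; [|exact hnz].
    transitivity (dot u n * x1 n + (x2 n * x3 P0 - x3 n * x2 P0) * dot u P1
                   - (x2 n * x3 P1 - x3 n * x2 P1) * dot u P0).
    - unfold nn, n, dot, cross; simpl; ring.
    - rewrite hu0, hu1; ring. }
  assert (k2 : x2 u = lam * x2 n).
  { unfold lam. apply (Rmult_eq_reg_l nn); [|exact hnz]. field_simplify; [|exact hnz].
    transitivity (dot u n * x2 n + (x3 n * x1 P0 - x1 n * x3 P0) * dot u P1
                   - (x3 n * x1 P1 - x1 n * x3 P1) * dot u P0).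
    - unfold nn, n, dot, cross; simpl; ring.
    - rewrite hu0, hu1; ring. }
  assert (k3 : x3 u = lam * x3 n).
  { unfold lam. apply (Rmult_eq_reg_l nn); [|exact hnz]. field_simplify; [|exact hnz].
    transitivity (dot u n * x3 n + (x1 n * x2 P0 - x2 n * x1 P0) * dot u P1
                   - (x1 n * x2 P1 - x2 n * x1 P1) * dot u P0).
    - unfold nn, n, dot, cross; simpl; ring.
    - rewrite hu0, hu1; ring. }
  assert (hlam : lam * lam = 1 - 2*a).
  { assert (hDD : lor u u = (1-a)*(1-a)*lor Q2 Q2 + 2*a*(1-a)*(lor Q2 P0 + lor Q2 P1)
                   + a*a*(lor P0 P0 + 2*lor P0 P1 + lor P1 P1))
      by (unfold u, d1, d2, d3, lor; simpl; ring).
    assert (hDD2 : lor u u = lam*lam * lor n n)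
      by (unfold lor at 1; rewrite k1, k2, k3; unfold lor; ring).
    rewrite hDD2, hnn, n0, n1, n2, q0, q1 in hDD. fold a in hDD.
    assert ((a+1)*(a-1) <> 0) by (apply Rmult_integral_contrapositive; split; lra).
    apply (Rmult_eq_reg_r ((a+1)*(a-1))); [|assumption]. nra. }
  exists (lam / s). split.
  { assert ((lam/s - 1) * (lam/s + 1) = 0).
    { replace ((lam/s - 1) * (lam/s + 1)) with ((lam*lam - s*s)/(s*s)) by (field; lra).
      rewrite hlam, hss. unfold Rdiv. ring. }
    destruct (Rmult_integral _ _ H) as [h|h]; [left|right]; lra. }
  assert (ha' : a = (1 - s*s)/2) by lra.
  assert (s3 : 0 < sqrt 3) by (apply sqrt_lt_R0; lra).
  assert (c1 : x1 u = - d1) by reflexivity.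
  assert (c2 : x2 u = d2) by reflexivity.
  assert (c3 : x3 u = d3) by reflexivity.
  unfold R2; rewrite hsq; unfold S, vscale, vadd, lcross, Jmap; simpl. fold a s.
    f_equal.
  - replace (lam / s * - (x2 P0 * x3 P1 - x3 P0 * x2 P1)) with (d1 / s)
      by (change (- (x2 P0 * x3 P1 - x3 P0 * x2 P1)) with (- x1 n);
          rewrite <- (Ropp_involutive d1), <- c1, k1; field; lra).
    apply fin_id; auto; lra.
  - replace (lam / s * (x3 P0 * x1 P1 - x1 P0 * x3 P1)) with (d2 / s)
      by (change (x3 P0 * x1 P1 - x1 P0 * x3 P1) with (x2 n); rewrite <- c2, k2; field; lra).
    apply fin_id; auto; lra.
  - replace (lam / s * (x1 P0 * x2 P1 - x2 P0 * x1 P1)) with (d3 / s)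
      by (change (x1 P0 * x2 P1 - x2 P0 * x1 P1) with (x3 n); rewrite <- c3, k3; field; lra).
    apply fin_id; auto; lra.
Qed.
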